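(* Assume the setting in the context (in particular Assumption (A)). Let $\rho>0$, $r\in V_f(\rho)$ and $n\in\mathbb{R}$, and let $[z,m]=\mathcal{A}_d(r,n)$ be the output of Procedure $\mathcal{A}_d$. Then: (i) $f(z)\leq f(r)-\frac{1}{2L_f}\|g(r)\|_*^2$; (ii) $f(z)-f^*\leq\left(\frac{\bar n_\rho}{m+1}\right)^2(f(r)-f^* )$; (iii) if $n\in(0,\lceil 4\bar n_\rho\rceil]$, then $m\in[n,\lceil 4\bar n_\rho\rceil]$.
   Context: Let $f:\mathbb{R}^n\to(-\infty,\infty]$ be a proper closed convex function such that the problem $f^*=\min_{x\in\mathbb{R}^n}f(x)$ is solvable. Let $\Omega_f=\{x: f(x)=f^*\}$, fix a norm $\|\cdot\|$ on $\mathbb{R}^n$ with dual norm $\|y\|_*=\sup\{y^Tz:\|z\|\leq 1\}$, and for $x\in\mathbb{R}^n$ let $\bar x=\arg\min_{z\in\Omega_f}\|x-z\|$. For $\rho\geq0$ let $V_f(\rho)=\{x: f(x)-f^*\leq\rho\}$. Let $\mathcal{A}$ be an iterative algorithm: for $x_0\in\mathrm{dom} f$ and integer $k\geq1$, $\mathcal{A}(x_0,k)$ denotes its $k$-th iterate started from $x_0$ (and $\mathcal{A}(x_0,0)=x_0$). Assumption (A): (i) for every $\rho>0$ there is $\mu_\rho>0$ with $f(x_0)-f^*\geq\frac{\mu_\rho}{2}\|x_0-\bar x_0\|^2$ for all $x_0\in V_f(\rho)$; (ii) there exist $a_f>0$, $L_f>0$ and $g:\mathbb{R}^n\to\mathbb{R}^n$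 with $g(x)=0\iff x\in\Omega_f$ such that for every $x_0\in\mathrm{dom} f$: $f(\mathcal{A}(x_0,1))\leq f(x_0)-\frac{1}{2L_f}\|g(x_0)\|_*^2$ and $f(\mathcal{A}(x_0,k))-f^*\leq\frac{a_f}{(k+1)^2}\|x_0-\bar x_0\|^2$ for all $k\geq1$; (iii) $\bar n_\rho:=\max\{\frac12,\sqrt{2a_f/\mu_\rho}\}$. Procedure $\mathcal{A}_d(r,n)$ (input $r\in\mathrm{dom} f$, $n\in\mathbb{R}$): set $x_0=r$, $k=0$. Repeat: $k\gets k+1$; set $x_k=\mathcal{A}(x_0,k)$ if $f(\mathcal{A}(x_0,k))\leq f(x_{k-1})$, and $x_k=x_{k-1}$ otherwise; set $\ell=\lfloor k/2\rfloor$; until $k\geq n$ and $f(x_\ell)-f(x_k)\leq\frac13(f(x_0)-f(x_\ell))$. Output $z=x_k$, $m=k$. *)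

(* Defs.v *)
From HB Require Import structures.
From mathcomp Require Import all_boot all_order all_algebra.
From mathcomp Require Import all_classical all_reals all_analysis.
Set Implicit Arguments. Unset Strict Implicit. Unset Printing Implicit Defensive.
Import Order.TTheory GRing.Theory Num.Theory.
Import numFieldNormedType.Exports.
Local Open Scope classical_set_scope.
Local Open Scope ring_scope.

Section Defs.
Variables (R : realType) (d : nat).
Local Notation vec := 'rV[R]_d.

Definition dotv (y z : vec) : R := \sum_(i < d) y 0 i * z 0 i.

Definition is_norm (nrm : vec -> R) : Prop :=
  [/\ forall x, nrm x = 0 -> x = 0,
      forall (a : R) x, nrm (a *: x) = `|a| * nrm x &
      forall x y, nrm (x + y) <= nrm x + nrm y].

Definition dual_norm (nrm : vec -> R) (y : vec) : R :=
  sup [set dotv y z | z in [set z | nrm z <= 1]].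

Definition proper_fun (f : vec -> \bar R) : Prop :=
  (forall x, f x != -oo)%E /\ exists x, (f x < +oo)%E.

Definition closed_fun (f : vec -> \bar R) : Prop :=
  forall (x : vec) (t : R), (t%:E < f x)%E -> \forall y \near x, (t%:E < f y)%E.

Definition convex_fun (f : vec -> \bar R) : Prop :=
  forall (x y : vec) (t : R), 0 <= t <= 1 ->
    (f (t *: x + (1 - t) *: y)%R <= t%:E * f x + (1 - t)%:E * f y)%E.

Definition domf (f : vec -> \bar R) : set vec := [set x | (f x < +oo)%E].

Definition Omega (f : vec -> \bar R) (fstar : R) : set vec :=
  [set x | f x = fstar%:E].

Definition distOmega (nrm : vec -> R) (f : vec -> \bar R) (fstar : R) (x : vec) : R :=
  inf [set nrm (x - z) | z in Omega f fstar].

Definition Vf (f : vec -> \bar R) (fstar rho : R) : set vec :=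
  [set x | (f x - fstar%:E <= rho%:E)%E].

Fixpoint ad_iter (A : vec -> nat -> vec) (f : vec -> \bar R) (r : vec) (k : nat)
  : vec :=
  match k with
  | 0 => r
  | k'.+1 => if (f (A r k'.+1) <= f (ad_iter A f r k'))%E then A r k'.+1
             else ad_iter A f r k'
  end.

Definition ad_stop (A : vec -> nat -> vec) (f : vec -> \bar R) (r : vec) (n : R)
  (k : nat) : Prop :=
  n <= k%:R /\
  (f (ad_iter A f r k./2) - f (ad_iter A f r k)
     <= (3^-1)%:E * (f (ad_iter A f r 0) - f (ad_iter A f r k./2)))%E.

Definition ad_output (A : vec -> nat -> vec) (f : vec -> \bar R) (r : vec) (n : R)
  (m : nat) : Prop :=
  (1 <= m)%N /\ ad_stop A f r n m /\
  forall k, (1 <= k)%N -> (k < m)%N -> ~ ad_stop A f r n k.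

Definition nbar (af mu : R) : R := Num.max (2^-1) (Num.sqrt (2 * af / mu)).

End Defs.

(* Main.v *)
Require Import Defs.
From HB Require Import structures.
From mathcomp Require Import all_boot all_order all_algebra.
From mathcomp Require Import all_classical all_reals all_analysis.
From mathcomp Require Import ring lra.
Import Order.TTheory GRing.Theory Num.Theory.
Import numFieldNormedType.Exports.
Local Open Scope classical_set_scope.
Local Open Scope ring_scope.

Lemma sq_half (R : realFieldType) (t : R) : 0 <= t -> t <= 2^-1 -> t ^+ 2 <= 4^-1.
Proof.
move=> a b; rewrite expr2.
have -> : (4^-1 : R) = 2^-1 * 2^-1 by field.
by apply: ler_pM.
Qed.

Theorem mainTheorem2 (R : realType) (d : nat)
  (f : 'rV[R]_d -> \bar R) (fstar : R) (nrm : 'rV[R]_d -> R)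
  (A : 'rV[R]_d -> nat -> 'rV[R]_d)
  (mu : R -> R) (af Lf : R) (g : 'rV[R]_d -> 'rV[R]_d)
  (* f proper closed convex, problem solvable with optimal value fstar *)
  (Hprop : proper_fun f) (Hclosed : closed_fun f) (Hconv : convex_fun f)
  (Hsolv : exists xs, f xs = fstar%:E)
  (Hmin : forall x, (fstar%:E <= f x)%E)
  (Hnorm : is_norm nrm)
  (HA0 : forall x0, A x0 0%N = x0)
  (* Assumption (A)(i) *)
  (HAi : forall rho : R, 0 < rho -> 0 < mu rho /\
     forall x0, Vf f fstar rho x0 ->
       ((mu rho / 2 * distOmega nrm f fstar x0 ^+ 2)%:E <= f x0 - fstar%:E)%E)
  (* Assumption (A)(ii) *)
  (Haf : 0 < af) (HLf : 0 < Lf)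
  (Hg : forall x, g x = 0 <-> Omega f fstar x)
  (HAii1 : forall x0, domf f x0 ->
     (f (A x0 1%N) <= f x0 - ((2 * Lf)^-1 * dual_norm nrm (g x0) ^+ 2)%:E)%E)
  (HAii2 : forall x0, domf f x0 -> forall k : nat, (1 <= k)%N ->
     (f (A x0 k) - fstar%:E
        <= (af / (k.+1%:R ^+ 2) * distOmega nrm f fstar x0 ^+ 2)%:E)%E)
  (rho : R) (Hrho : 0 < rho) (r : 'rV[R]_d) (Hr : Vf f fstar rho r) (n : R) :
  (* the procedure A_d(r, n) terminates *)
  (exists m, ad_output A f r n m) /\
  (* and its output [z, m] = [x_m, m] satisfies (i)-(iii) *)
  forall m, ad_output A f r n m ->
    let z := ad_iter A f r m in
    let nb := nbar af (mu rho) in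
    [/\ (f z <= f r - ((2 * Lf)^-1 * dual_norm nrm (g r) ^+ 2)%:E)%E,
        (f z - fstar%:E <= ((nb / m.+1%:R) ^+ 2)%:E * (f r - fstar%:E))%E &
        (0 < n -> n <= ((Num.ceil (4 * nb))%:~R : R) ->
           n <= m%:R /\ m%:R <= ((Num.ceil (4 * nb))%:~R : R))].
Proof.
set x := ad_iter A f r.
set nb := nbar af (mu rho).
have [Hmu HAi'] := HAi rho Hrho.
have Hfr0 : (fstar%:E <= f r)%E := Hmin r.
have Hfrfin : f r = (fine (f r))%:E.
  move: Hr Hfr0; rewrite /Vf /=; case: (f r) => //.
set F0 := fine (f r).
have Hdec : forall k, (f (x k.+1) <= f (x k))%E.
  by move=> k; rewrite /x /=; case: ifP => // /negbT; rewrite -ltNge => /ltW.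
have Hmono : forall j i, (f (x (j + i)%N) <= f (x j))%E.
  move=> j; elim=> [|i IH]; first by rewrite addn0.
  by rewrite addnS; apply: le_trans IH.
have Hle0 : forall k, (f (x k) <= f r)%E by move=> k; have := Hmono 0%N k.
have Hfin : forall k, f (x k) = (fine (f (x k)))%:E.
  move=> k; move: (Hle0 k) (Hmin (x k)); rewrite Hfrfin; case: (f (x k)) => //.
have HxA : forall k, (1 <= k)%N -> (f (x k) <= f (A r k))%E.
  case=> // k _; rewrite /x /=; case: ifP => // /negbT; rewrite -ltNge => /ltW.
  done.
have Hdom : domf f r by rewrite /domf /= Hfrfin ltry.
set D := distOmega nrm f fstar r.
have HD : mu rho / 2 * D ^+ 2 <= F0 - fstar.
  by have := HAi' r Hr; rewrite Hfrfin -EFinB lee_fin.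
have Hnb : 2 * af / mu rho <= nb ^+ 2.
  have h0 : 0 <= 2 * af / mu rho by apply: divr_ge0; [apply: mulr_ge0|]; apply: ltW.
  rewrite -[X in X <= _](sqr_sqrtr h0).
  have hs : Num.sqrt (2 * af / mu rho) <= nb by rewrite /nb /nbar le_max lexx orbT.
  have hs0 : 0 <= Num.sqrt (2 * af / mu rho) by apply: sqrtr_ge0.
  nra.
have Hnb2 : 2^-1 <= nb by rewrite /nb /nbar le_max lexx.
have Hk : forall k, (1 <= k)%N ->
    fine (f (x k)) - fstar <= (nb / k.+1%:R) ^+ 2 * (F0 - fstar).
  move=> k k1.
  have h1 := le_trans (HxA k k1) (lexx _).
  have h2 := HAii2 r Hdom k k1.
  have h3 : (f (x k) - fstar%:E <= (af / (k.+1%:R ^+ 2) * D ^+ 2)%:E)%E.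
    by apply: le_trans h2; apply: leeB.
  move: h3; rewrite Hfin -EFinB lee_fin => h3.
  apply: (le_trans h3).
  have hc : 0 <= af / (k.+1%:R ^+ 2) by apply: divr_ge0; [apply: ltW|apply: exprn_ge0].
  have hD2 : D ^+ 2 <= 2 / mu rho * (F0 - fstar).
    rewrite -(ler_pM2l (_ : 0 < mu rho / 2)); last by apply: divr_gt0.
    apply: (le_trans HD); rewrite le_eqVlt; apply/orP; left; apply/eqP.
    by field; rewrite gt_eqF.
  apply: (le_trans (ler_wpM2l hc hD2)).
  rewrite mulrA expr_div_n ler_wpM2r //.
    by rewrite subr_ge0 -lee_fin -Hfrfin.
  have -> : af / k.+1%:R ^+ 2 * (2 / mu rho) = (2 * af / mu rho) / k.+1%:R ^+ 2.
    by field; apply/andP; split; rewrite gt_eqF //; have := ler0n R k; lra.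
  by apply: ler_wpM2r => //; rewrite invr_ge0 exprn_ge0.
have Hstop : forall k : nat, 4 * nb <= k%:R -> n <= k%:R -> ad_stop A f r n k.
  move=> k hk hn; split => //.
  have k2 : (2 <= k)%N.
    have h : (1 : R) < k%:R by lra.
    by move: h; rewrite ltr1n.
  have l1 : (1 <= k./2)%N.
    by move: k2; rewrite -{1}(odd_double_half k); case: (odd k); case: (k./2) => // .
  have hl : 2 * nb <= (k./2).+1%:R.
    have : k%:R <= (k./2).+1%:R * 2 :> R.
      rewrite -natrM ler_nat -{1}(odd_double_half k) mulnC mul2n doubleS.
      by case: (odd k); rewrite ?add1n ?add0n // ltnW // ltnS leqnSn.
    lra.
  have hq : (nb / (k./2).+1%:R) ^+ 2 <= 4^-1.
    have hp : 0 < (k./2).+1%:R :> R by rewrite ltr0n.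
    have : nb / (k./2).+1%:R <= 2^-1.
      by rewrite ler_pdivrMr // -(ler_pM2l (_ : 0 < 2 :> R)) // mulrA mulfV // mul1r.
    have : 0 <= nb / (k./2).+1%:R by apply: divr_ge0 => //; lra.
    by move=> a b; apply: sq_half.
  have h1 := Hk _ l1; have h2 := Hmin (x k).
  have h0 : 0 <= F0 - fstar by rewrite subr_ge0 -lee_fin -Hfrfin.
  have h3 := ler_wpM2r h0 hq.
  move: h2; rewrite (Hfin k) lee_fin => h2.
  rewrite /= -/x (Hfin k) (Hfin k./2) Hfrfin -/F0 -!EFinB -EFinM lee_fin.
  move: h1 h2 h3.
  move: (fine (f (x k))) (fine (f (x k./2))) (nb / _) => a b c.
  clear; move=> h1 h2 h3 /=; lra.
have Hex : exists k, (1 <= k)%N /\ ad_stop A f r n k.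
  have hn1 := ler_norm n; have hn2 := normr_ge0 n.
  have h0 : 0 <= 4 * nb + `|n| by lra.
  have hk := archi_boundP h0.
  exists (Num.Def.archi_bound (4 * nb + `|n|)); split.
    by rewrite -(ltr_nat R); lra.
  by apply: Hstop; lra.
pose P := fun k => `[< (1 <= k)%N /\ ad_stop A f r n k >].
have exP : exists k, P k by case: Hex => k hk; exists k; apply/asboolP.
have Hminl : forall m, ad_output A f r n m -> forall k, (1 <= k)%N ->
    ad_stop A f r n k -> (m <= k)%N.
  move=> m [m1 [sm hm]] k k1 sk; rewrite leqNgt; apply/negP => km.
  exact: (hm k k1 km sk).
split.
  case: (ex_minnP exP) => m /asboolP [m1 sm] hmin; exists m; split=> //; split=> //.
  move=> k k1 km sk.
  have : (m <= k)%N by apply: hmin; apply/asboolP.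
  by rewrite leqNgt km.
move=> m Hm; have [m1 [sm hm]] := Hm; move=> z nb0; split.
- have h := Hmono 1%N m.-1; rewrite add1n prednK // in h.
  apply: (le_trans h); apply: (le_trans (HxA 1%N isT)); exact: HAii1.
- have := Hk m m1.
  move: (Hfin m); rewrite /z => ->; rewrite Hfrfin -!EFinB -EFinM lee_fin.
  done.
- move=> n0 nN; split; first exact: sm.1.
  have hc0 : 0 <= Num.ceil (4 * nb) by rewrite ceil_ge0; lra.
  have [K hK] : exists K : nat, Num.ceil (4 * nb) = K%:Z.
    by exists `|Num.ceil (4 * nb)|%N; rewrite gez0_abs.
  move: nN; rewrite /nb0 hK -pmulrn => nN.
  have h4 : 4 * nb <= K%:R by have := ceil_ge (4 * nb); rewrite hK -pmulrn.
  have K1 : (1 <= K)%N by rewrite -(ler_nat R); lra.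
  by rewrite ler_nat; apply: Hminl Hm K K1 (Hstop K h4 nN).
Qed.
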